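(* Let $n\ge1$, let $g=(g_{ij})$ be a nondegenerate symmetric complex $n\times n$ matrix with inverse $\eta=(\eta_{ij})=g^{-1}$, and let $(\alpha^{ij})$ be a symmetric complex $n\times n$ matrix. Consider the system of hydrodynamic type $$u^i_t=\big(\eta_{nj}u^ju^i+\alpha^{ij}\eta_{jk}u^k\big)_x,\qquad i=1,\dots,n,$$ (summation over repeated indices), written as $u^i_t=A^i_k(u)u^k_x$ with $A^i_k=\eta_{nj}u^j\delta^i_k+u^i\eta_{nk}+\alpha^{ij}\eta_{jk}$. Then the Haantjes tensor of $A=(A^i_k(u))$ vanishes identically.
   Context: Regard $A$ as a field of endomorphisms of the tangent bundle of $\mathbb{C}^n$ with coordinates $u=(u^1,\dots,u^n)$. Its Nijenhuis tensor is $N_A(X,Y)=[AX,AY]-A[X,AY]-A[AX,Y]+A^2[X,Y]$ (with $[\,,\,]$ the Lie bracket of vector fields), and its Haantjes tensor is $H_A(X,Y)=N_A(AX,AY)-AN_A(X,AY)-AN_A(AX,Y)+A^2N_A(X,Y)$. *)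

(* Defs.v *)
From HB Require Import structures.
From mathcomp Require Import all_boot all_order all_algebra.
From mathcomp Require Import mpoly.
Set Implicit Arguments. Unset Strict Implicit. Unset Printing Implicit Defensive.
Import GRing.Theory Num.Theory.
Local Open Scope ring_scope.

(* Polynomial vector fields and endomorphism fields on C^n, coordinates u^i = 'X_i. *)
Section VF.
Variables (K : fieldType) (n : nat).

Definition vfield := 'I_n -> {mpoly K[n]}.
Definition endofield := 'I_n -> 'I_n -> {mpoly K[n]}.

Definition vact (X : vfield) (f : {mpoly K[n]}) : {mpoly K[n]} :=
  \sum_(k < n) X k * mderiv k f.

Definition lie (X Y : vfield) : vfield := fun i => vact X (Y i) - vact Y (X i).

Definition vadd (X Y : vfield) : vfield := fun i => X i + Y i.
Definition vsub (X Y : vfield) : vfield := fun i => X i - Y i.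

Definition eapp (A : endofield) (X : vfield) : vfield :=
  fun i => \sum_(k < n) A i k * X k.

Definition nijenhuis (A : endofield) (X Y : vfield) : vfield :=
  vadd (vsub (vsub (lie (eapp A X) (eapp A Y)) (eapp A (lie X (eapp A Y))))
             (eapp A (lie (eapp A X) Y)))
       (eapp A (eapp A (lie X Y))).

Definition haantjes (A : endofield) (X Y : vfield) : vfield :=
  vadd (vsub (vsub (nijenhuis A (eapp A X) (eapp A Y))
                   (eapp A (nijenhuis A X (eapp A Y))))
             (eapp A (nijenhuis A (eapp A X) Y)))
       (eapp A (eapp A (nijenhuis A X Y))).

End VF.

(* the last index n (i.e. n-1 in 0-based 'I_n), given n >= 1 *)
Definition ordlast (n : nat) (hn : (0 < n)%N) : 'I_n :=
  Ordinal (etrans (ltn_predL n) hn).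

Definition hydroA (K : fieldType) (n : nat) (hn : (0 < n)%N)
  (eta alpha : 'M[K]_n) : endofield K n :=
  fun i k =>
    (\sum_(j < n) (eta (ordlast hn) j)%:MP * 'X_j) * (i == k)%:R
    + 'X_i * (eta (ordlast hn) k)%:MP
    + (\sum_(j < n) alpha i j * eta j k)%:MP.

(* Main.v *)
Require Import Defs.
From HB Require Import structures.
From mathcomp Require Import all_boot all_order all_algebra.
From mathcomp Require Import mpoly.
From mathcomp Require Import ring.
From Stdlib Require Import FunctionalExtensionality.
Import GRing.Theory.
Local Open Scope ring_scope.

Section S.
Variables (K : fieldType) (n : nat).
Local Notation R := {mpoly K[n]}.

Lemma mderivXj (i j : 'I_n) : mderiv i ('X_j : R) = (j == i)%:R.
Proof.
rewrite mderivX mnm1E; case: eqP => [->|_]; last by rewrite scale0r.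
have -> : (U_(i) - U_(i) = 0)%MM by apply/mnmP => k; rewrite mnmBE subnn mnm0E.
by rewrite mpolyX0 scale1r.
Qed.

Lemma vactD (X : vfield K n) f g : vact X (f + g) = vact X f + vact X g.
Proof. by rewrite /vact -big_split; apply: eq_bigr => k _; rewrite mderivD mulrDr. Qed.
Lemma vactB (X : vfield K n) f g : vact X (f - g) = vact X f - vact X g.
Proof. by rewrite /vact -sumrB; apply: eq_bigr => k _; rewrite mderivB mulrBr. Qed.
Lemma vactM (X : vfield K n) f g : vact X (f * g) = vact X f * g + f * vact X g.
Proof.
rewrite /vact mulr_suml mulr_sumr -big_split; apply: eq_bigr => k _.
rewrite mderivM; transitivity (X k * mderiv k f * g + f * (X k * mderiv k g)); [ring|by []].
Qed.
Lemma vactC (X : vfield K n) c : vact X c%:MP = 0.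
Proof. by rewrite /vact big1 // => k _; rewrite mderivC mulr0. Qed.
Lemma vactX (X : vfield K n) j : vact X 'X_j = X j.
Proof.
rewrite /vact (bigD1 j) //= mderivXj eqxx mulr1 big1 ?addr0 // => k /negbTE.
by rewrite mderivXj eq_sym => ->; rewrite mulr0.
Qed.
Lemma vact_sum (X : vfield K n) (F : 'I_n -> R) : vact X (\sum_j F j) = \sum_j vact X (F j).
Proof.
rewrite /vact exchange_big /=; apply: eq_bigr => k _.
by rewrite raddf_sum mulr_sumr.
Qed.
Definition DA (Z : vfield K n) (A : endofield K n) : endofield K n :=
  fun i k => vact Z (A i k).

Lemma vact_eapp Z A (W : vfield K n) k :
  vact Z (eapp A W k) = eapp (DA Z A) W k + eapp A (fun l => vact Z (W l)) k.
Proof.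
rewrite /eapp vact_sum -big_split; apply: eq_bigr => l _.
by rewrite vactM.
Qed.

Lemma DW_eapp Z A (W : vfield K n) :
  (fun k => vact Z (eapp A W k)) =
  (fun k => eapp (DA Z A) W k + eapp A (fun l => vact Z (W l)) k).
Proof. by apply: functional_extensionality => k; rewrite vact_eapp. Qed.

Lemma eappBf A (P Q : vfield K n) :
  eapp A (fun k => P k - Q k) = (fun i => eapp A P i - eapp A Q i).
Proof. by apply: functional_extensionality => i; rewrite /eapp -sumrB; apply: eq_bigr => k _; rewrite mulrBr. Qed.
Lemma eappDf A (P Q : vfield K n) :
  eapp A (fun k => P k + Q k) = (fun i => eapp A P i + eapp A Q i).
Proof. by apply: functional_extensionality => i; rewrite /eapp -big_split; apply: eq_bigr => k _; rewrite mulrDr. Qed.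

Lemma nij_tens A X Y i : nijenhuis A X Y i =
  eapp (DA (eapp A X) A) Y i - eapp (DA (eapp A Y) A) X i
  - (eapp A (eapp (DA X A) Y) i - eapp A (eapp (DA Y A) X) i).
Proof.
rewrite /nijenhuis /vadd /vsub /lie.
rewrite !eappBf !DW_eapp !eappDf !vact_eapp.
ring.
Qed.
Lemma eappMlf A (a : R) (P : vfield K n) :
  eapp A (fun k => a * P k) = (fun i => a * eapp A P i).
Proof. by apply: functional_extensionality => i; rewrite /eapp mulr_sumr; apply: eq_bigr => k _; rewrite mulrCA. Qed.
Lemma eappMrf A (a : R) (P : vfield K n) :
  eapp A (fun k => P k * a) = (fun i => eapp A P i * a).
Proof. by apply: functional_extensionality => i; rewrite /eapp mulr_suml; apply: eq_bigr => k _; rewrite mulrA. Qed.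

Lemma vact_nat (Z : vfield K n) m : vact Z (m%:R) = 0.
Proof. by rewrite -(rmorph_nat (@mpolyC n K)) vactC. Qed.

Variables (hn : (0 < n)%N) (eta alpha : 'M[K]_n).
Definition cc (k : 'I_n) : R := (eta (ordlast hn) k)%:MP.
Definition ell (W : vfield K n) : R := \sum_(j < n) cc j * W j.
Local Notation A := (hydroA hn eta alpha).

Lemma DA_hydro Z : DA Z A = fun i k => ell Z * (i == k)%:R + Z i * cc k.
Proof.
apply: functional_extensionality => i; apply: functional_extensionality => k.
rewrite /DA /hydroA !vactD !vactM vact_sum vactC vact_nat vactX vactC.
rewrite /ell /cc.
have -> : \sum_(j < n) vact Z ((eta (ordlast hn) j)%:MP * 'X_j) = \sum_(j < n) (eta (ordlast hn) j)%:MP * Z j.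
  by apply: eq_bigr => j _; rewrite vactM vactC vactX mul0r add0r.
ring.
Qed.

Lemma eapp_DA Z W i : eapp (DA Z A) W i = ell Z * W i + Z i * ell W.
Proof.
rewrite DA_hydro /eapp.
transitivity (\sum_k (ell Z * (i == k)%:R * W k) + Z i * ell W).
  rewrite /ell mulr_sumr -big_split; apply: eq_bigr => k _ /=; ring.
congr (_ + _); rewrite (bigD1 i) //= eqxx big1 ?addr0; first by rewrite mulr1.
by move=> k; rewrite eq_sym => /negbTE ->; rewrite mulr0 mul0r.
Qed.

Lemma nij_hydro P Q : nijenhuis A P Q = fun i =>
  ell (eapp A P) * Q i + eapp A P i * ell Q - ell (eapp A Q) * P i - eapp A Q i * ell P.
Proof.
apply: functional_extensionality => i.
rewrite nij_tens !eapp_DA.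
have -> : eapp A (eapp (DA P A) Q) i = eapp A (eapp (DA Q A) P) i.
  by congr eapp; apply: functional_extensionality => l; rewrite !eapp_DA; ring.
ring.
Qed.

Lemma haantjes_hydro X Y : haantjes A X Y = fun _ => 0.
Proof.
rewrite /haantjes /vadd /vsub !nij_hydro.
rewrite !eappBf !eappDf !eappMlf !eappMrf.
apply: functional_extensionality => i.
ring.
Qed.
End S.

Theorem proposition7p1 (C : numClosedFieldType) (n : nat) (hn : (0 < n)%N)
  (g alpha : 'M[C]_n) :
  g^T = g -> g \in unitmx -> alpha^T = alpha ->
  forall X Y : vfield C n,
    haantjes (hydroA hn (invmx g) alpha) X Y = (fun _ => 0).
Proof. by move=> _ _ _ X Y; apply: haantjes_hydro. Qed.
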